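(* Suppose $F$ is symmetric ($F(-i)=1-F(i)$ for all $i$) and fix $R\in(0,1)$. (i) If the receiver obtains only buy recommendations (resp. only don't-buy recommendations), then as their number tends to infinity the posterior probability of $(1,1)$ (resp. $(0,0)$) converges to $1$: $\lim_{b\to\infty}p_H(b,0)=1$ and $\lim_{d\to\infty}p_L(0,d)=1$. (ii) If the receiver obtains mixed recommendations, then for all $b,d>0$, $p_1(b,d)/p_2(b,d)=q_1/q_2$ and $p_H(b,d)=p_L(b,d)=0$.
   Context: Setting. Consumer types are $i\in[-1/2,1/2]$, distributed according to a continuous cumulative distribution function $F$ with full support on $[-1/2,1/2]$. A product has a quality vector $(Q_1,Q_2)\in\{0,1\}^2$; a type-$i$ consumer gets payoff $(1/2+i)Q_1+(1/2-i)Q_2$. The versions $(1,1),(1,0),(0,1),(0,0)$ have prior probabilities $q_H,q_1,q_2,q_L$, all strictly positive and summing to $1$. Given a threshold $R\in(0,1)$, each sender, with type drawn from $F$ independently of the product and of the other senders, gives a buy recommendation if her payoff from the product is at least $R$ and a don't-buy recommendation otherwise. Let $\phi_1(R)=1-F(R-1/2)$, $\phi_2(R)=F(1/2-R)$. After observing $b$ buy and $d$ don't-buy recommendations ($b+d>0$), the receiver's Bayesian posterior $(p_H(b,d),p_1(b,d),p_2(b,d),p_L(b,d))$ over $(1,1),(1,0),(0,1),(0,0)$ is proportional to $(q_H\mathbf 1[d=0],\ q_1\phi_1(R)^b(1-\phi_1(R))^d,\ q_2\phi_2(R)^b(1-\phi_2(R))^d,\ q_L\mathbf 1[b=0])$.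 *)

(* Defs.v *)
From Stdlib Require Import Reals.
From Coquelicot Require Import Coquelicot.
Open Scope R_scope.

Definition cdf_full_support (F : R -> R) : Prop :=
  (forall x y, x <= y -> F x <= F y) /\
  (forall x, continuity_pt F x) /\
  (forall x, x <= -1/2 -> F x = 0) /\
  (forall x, 1/2 <= x -> F x = 1) /\
  (forall x y, -1/2 <= x -> x < y -> y <= 1/2 -> F x < F y).

Definition symmetric_cdf (F : R -> R) : Prop :=
  forall i, -1/2 <= i <= 1/2 -> F (- i) = 1 - F i.

Definition phi1 (F : R -> R) (Rth : R) : R := 1 - F (Rth - 1/2).
Definition phi2 (F : R -> R) (Rth : R) : R := F (1/2 - Rth).

(* Unnormalized posterior weights after b buy and d don't-buy recommendations. *)
Definition wH (qH : R) (b d : nat) : R := qH * (if Nat.eqb d 0 then 1 else 0).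
Definition w1 (F : R -> R) (Rth q1 : R) (b d : nat) : R :=
  q1 * (phi1 F Rth) ^ b * (1 - phi1 F Rth) ^ d.
Definition w2 (F : R -> R) (Rth q2 : R) (b d : nat) : R :=
  q2 * (phi2 F Rth) ^ b * (1 - phi2 F Rth) ^ d.
Definition wL (qL : R) (b d : nat) : R := qL * (if Nat.eqb b 0 then 1 else 0).

Definition wsum F Rth qH q1 q2 qL b d : R :=
  wH qH b d + w1 F Rth q1 b d + w2 F Rth q2 b d + wL qL b d.

(* Bayesian posterior over (1,1),(1,0),(0,1),(0,0). *)
Definition pH F Rth qH q1 q2 qL b d := wH qH b d / wsum F Rth qH q1 q2 qL b d.
Definition p1 F Rth qH q1 q2 qL b d := w1 F Rth q1 b d / wsum F Rth qH q1 q2 qL b d.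
Definition p2 F Rth qH q1 q2 qL b d := w2 F Rth q2 b d / wsum F Rth qH q1 q2 qL b d.
Definition pL F Rth qH q1 q2 qL b d := wL qL b d / wsum F Rth qH q1 q2 qL b d.

(* Main.v *)
Require Import Defs.
From Stdlib Require Import Reals Lra Lia.
From Coquelicot Require Import Coquelicot.
Open Scope R_scope.

Lemma lim_aux (a c r : R) : 0 < a -> 0 < r < 1 ->
  is_lim_seq (fun n : nat => a / (a + c * r ^ n)) 1.
Proof.
  intros Ha Hr.
  replace (Finite 1) with (Finite (a / (a + c * 0))) by (f_equal; field; lra).
  apply is_lim_seq_div'.
  - apply is_lim_seq_const.
  - apply is_lim_seq_plus'. apply is_lim_seq_const.
    apply (is_lim_seq_scal_l (fun n => r ^ n) c 0).
    apply is_lim_seq_geom. rewrite Rabs_right; lra.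
  - lra.
Qed.

Theorem lemma3 (F : R -> R) (qH q1 q2 qL Rth : R) :
  cdf_full_support F ->
  symmetric_cdf F ->
  0 < qH -> 0 < q1 -> 0 < q2 -> 0 < qL -> qH + q1 + q2 + qL = 1 ->
  0 < Rth < 1 ->
  (is_lim_seq (fun b : nat => pH F Rth qH q1 q2 qL b 0%nat) 1 /\
   is_lim_seq (fun d : nat => pL F Rth qH q1 q2 qL 0%nat d) 1) /\
  (forall b d : nat, (0 < b)%nat -> (0 < d)%nat ->
     p1 F Rth qH q1 q2 qL b d / p2 F Rth qH q1 q2 qL b d = q1 / q2 /\
     pH F Rth qH q1 q2 qL b d = 0 /\
     pL F Rth qH q1 q2 qL b d = 0).
Proof.
  intros [Hmono [Hcont [H0 [H1 Hstr]]]] Hsym HqH Hq1 Hq2 HqL Hsum HR.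
  assert (Hlo : 0 < F (Rth - 1/2)).
  { assert (F (-1/2) = 0) by (apply H0; lra). assert (F (-1/2) < F (Rth - 1/2)) by (apply Hstr; lra). lra. }
  assert (Hhi : F (Rth - 1/2) < 1).
  { assert (F (1/2) = 1) by (apply H1; lra). assert (F (Rth - 1/2) < F (1/2)) by (apply Hstr; lra). lra. }
  assert (Hp2 : phi2 F Rth = phi1 F Rth).
  { unfold phi1, phi2. replace (1/2 - Rth) with (- (Rth - 1/2)) by ring.
    apply Hsym; lra. }
  set (p := phi1 F Rth) in *.
  assert (Hp : 0 < p < 1) by (unfold p, phi1; lra).
  split; [split|].
  - apply is_lim_seq_incr_1.
    eapply is_lim_seq_ext; [|apply (lim_aux qH ((q1 + q2) * p) p); lra].
    intro n. unfold pH, wsum, wH, w1, w2, wL. rewrite Hp2. fold p. simpl.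
    assert (0 < p ^ n) by (apply pow_lt; lra). field. apply Rgt_not_eq. assert (0 < p * p ^ n) by (apply Rmult_lt_0_compat; lra). nra.
  - apply is_lim_seq_incr_1.
    eapply is_lim_seq_ext; [|apply (lim_aux qL ((q1 + q2) * (1 - p)) (1 - p)); lra].
    intro n. unfold pL, wsum, wH, w1, w2, wL. rewrite Hp2. fold p. simpl.
    assert (0 < (1 - p) ^ n) by (apply pow_lt; lra). field. apply Rgt_not_eq. assert (0 < (1 - p) * (1 - p) ^ n) by (apply Rmult_lt_0_compat; lra). nra.
  - intros b d Hb Hd.
    destruct b as [|b]; [lia|]. destruct d as [|d]; [lia|].
    assert (0 < p ^ S b) by (apply pow_lt; lra).
    assert (0 < (1 - p) ^ S d) by (apply pow_lt; lra).
    assert (0 < p ^ S b * (1 - p) ^ S d) by (apply Rmult_lt_0_compat; lra).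
    unfold p1, p2, pH, pL, wsum, wH, w1, w2, wL. rewrite Hp2. fold p.
    simpl Nat.eqb. cbv iota.
    split; [|split].
    + field. repeat split; nra.
    + field. nra.
    + field. nra.
Qed.
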